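(* For any finite set $\mathcal{I}$ of closed intervals on the real line and any $k \in \mathbb{N}$, there exists a balanced $k$-coloring of $\mathcal{I}$.
   Context: Let $\mathcal{I}=\{I_1,\dots,I_n\}$ be a finite set of closed intervals $[\ell,r]\subset\mathbb{R}$ and $K=\{1,\dots,k\}$. A $k$-coloring is a map $\chi:\mathcal{I}\to K$. For $x\in\mathbb{R}$ and $i\in K$, let $c_i(x)$ be the number of intervals of $\mathcal{I}$ that contain $x$ and have color $i$. The imbalance at $x$ is $\mathrm{imb}(x)=\max_{i,j\in K}|c_i(x)-c_j(x)|$, and the imbalance of $\chi$ is $\mathrm{imb}(\chi)=\max_{x\in\mathbb{R}}\mathrm{imb}(x)$. A $k$-coloring is called balanced if its imbalance is at most one. *)

(* Defs.v *)
From mathcomp Require Import all_boot all_order all_algebra.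
From mathcomp Require Import reals.
Set Implicit Arguments. Unset Strict Implicit. Unset Printing Implicit Defensive.
Import Order.TTheory GRing.Theory Num.Theory.
Local Open Scope ring_scope.

(* A finite family of closed intervals [l j, r j], j : 'I_n, on R.
   A k-coloring is chi : 'I_n -> 'I_k (colors {0,..,k-1} stand for {1,..,k}). *)

Definition color_count (R : realType) (n k : nat) (l r : 'I_n -> R)
  (chi : 'I_n -> 'I_k) (i : 'I_k) (x : R) : nat :=
  #|[set j : 'I_n | (l j <= x <= r j) && (chi j == i)]|.

Definition imb_at (R : realType) (n k : nat) (l r : 'I_n -> R)
  (chi : 'I_n -> 'I_k) (x : R) : nat :=
  (\max_(i < k) \max_(j < k)
     `|(color_count l r chi i x)%:Z - (color_count l r chi j x)%:Z|)%N.

Definition balanced (R : realType) (n k : nat) (l r : 'I_n -> R)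
  (chi : 'I_n -> 'I_k) : Prop :=
  forall x : R, (imb_at l r chi x <= 1)%N.

(* Main.v *)
From Stdlib Require Import ZArith Lia ClassicalEpsilon.
Require Import Defs.
From mathcomp Require Import all_boot all_order all_algebra.
From mathcomp Require Import reals.
From mathcomp Require Import interval zify.
Import Order.TTheory GRing.Theory Num.Theory.

Local Open Scope Z_scope.
Lemma arZ (a b a' b' : Z) : a' + b' = a + b -> a' <= b' + 1 -> b' <= a' + 1 ->
  a'*a'+b'*b' <= a*a+b*b /\ (b + 2 <= a \/ a + 2 <= b -> a'*a'+b'*b' < a*a+b*b).
Proof.
intros h1 h2 h3.
assert (e1 : 2*(a'*a'+b'*b') = (a'+b')*(a'+b') + (a'-b')*(a'-b')) by ring.
assert (e2 : 2*(a*a+b*b) = (a+b)*(a+b) + (a-b)*(a-b)) by ring.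
assert (d1 : (a'-b')*(a'-b') <= 1) by nia.
assert (d2 : 0 <= (a-b)*(a-b)) by apply Z.square_nonneg.
rewrite h1 in e1.
split. lia.
intros h. assert (4 <= (a-b)*(a-b)).
{ destruct h as [h|h].
  - assert (2*2 <= (a-b)*(a-b)) by (apply Z.mul_le_mono_nonneg; lia). lia.
  - replace ((a-b)*(a-b)) with ((b-a)*(b-a)) by ring.
    assert (2*2 <= (b-a)*(b-a)) by (apply Z.mul_le_mono_nonneg; lia). lia. }
lia.
Qed.
Local Close Scope Z_scope.
Lemma ar (a b a' b' : nat) : (a' + b' = a + b -> a' <= b' + 1 -> b' <= a' + 1 ->
  a'^2+b'^2 <= a^2+b^2 /\ ((b + 2 <= a) \/ (a + 2 <= b) -> a'^2+b'^2 < a^2+b^2))%N.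
Proof.
move=> h1 h2 h3.
have := arZ (Z.of_nat a) (Z.of_nat b) (Z.of_nat a') (Z.of_nat b').
rewrite !expnS !expn0 !muln1. lia.
Qed.

Local Open Scope ring_scope.

Section Two.
Variable R : realType.
Variable T : eqType.
Definition itvT := (itv_bound R * itv_bound R)%type.
Definition inI (p : itvT) (x : R) : bool := (p.1 <= BLeft x)%O && (BRight x <= p.2)%O.
Definition sgnb (b : bool) : int := if b then 1 else -1.
Definition term (c : T -> bool) (x : R) (p : T * itvT) : int :=
  if inI p.2 x then sgnb (c p.1) else 0.
Definition ssum (s : seq (T * itvT)) (c : T -> bool) (x : R) : int :=
  \sum_(p <- s) term c x p.

Lemma bnd_compl (x : R) (b : itv_bound R) : ~~ (BRight x <= b)%O = (b <= BLeft x)%O.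
Proof. case: b => [[] y|[]] /=; rewrite ?bnd_simp //.
all: try (by rewrite -?ltNge -?leNgt).
Qed.

Lemma term_abs c x p : `|term c x p| <= 1.
Proof. rewrite /term /sgnb; case: ifP => _ //; case: ifP => _ //. Qed.

Lemma ssum_eq (s : seq (T * itvT)) c c' x :
  (forall p, p \in s -> c p.1 = c' p.1) -> ssum s c x = ssum s c' x.
Proof.
move=> h; rewrite /ssum big_seq [RHS]big_seq; apply: eq_bigr => p ps.
by rewrite /term h.
Qed.

Lemma merge (X Y : T * itvT) s' c x :
  (X.2.2 <= Y.2.2)%O -> c X.1 = ~~ c Y.1 ->
  (X.2.1 <= BLeft x)%O -> (Y.2.1 <= BLeft x)%O ->
  ssum (X :: Y :: s') c x = ssum ((Y.1, (X.2.2, Y.2.2)) :: s') c x.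
Proof.
move=> hXY hc hX hY; rewrite /ssum !big_cons addrA; congr (_ + _).
rewrite /term /inI /= hX hY hc /=.
rewrite -bnd_compl.
case: (boolP (BRight x <= X.2.2)%O) => h1 /=.
  have -> : (BRight x <= Y.2.2)%O by apply: le_trans hXY.
  by case: (c Y.1).
by case: (BRight x <= Y.2.2)%O; rewrite ?addr0 ?add0r //; case: (c Y.1).
Qed.

Lemma two_col (s : seq (T * itvT)) : uniq (map fst s) ->
  exists c : T -> bool, forall x, `|ssum s c x| <= 1.
Proof.
have [m] := ubnP (size s); elim: m s => // m IH s hs us.
case: s hs us => [|A0 [|B0 s0]] hs us.
- by exists (fun _ => true) => x; rewrite /ssum big_nil.
- by exists (fun _ => true) => x; rewrite /ssum big_cons big_nil addr0 term_abs.
pose leT := fun p q : T * itvT => (p.2.1 <= q.2.1)%O.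
have tot : total leT by move=> p q; apply: le_total.
have tr : transitive leT by move=> p q r'; apply: le_trans.
set s := [:: A0, B0 & s0] in hs us *.
have hperm : perm_eq (sort leT s) s by rewrite perm_sort.
have hsorted := sort_sorted tot s.
have hsz := size_sort leT s.
move: hperm hsorted hsz; case: (sort leT s) => [|A [|B s']] //= hperm hsorted hsz.
have hAB : leT A B by case/andP: hsorted.
have hBs' : all (leT B) s'.
  by apply: (order_path_min tr); case/andP: hsorted.
have Esum : forall c x, ssum s c x = ssum [:: A, B & s'] c x.
  by move=> c x; rewrite /ssum (perm_big _ hperm).
have us2 : uniq (map fst [:: A, B & s']) by rewrite (perm_uniq (perm_map fst hperm)).
have hsz2 : ((size s').+1 < m)%N by move: hs hsz => /= hs [] hsz; lia.
have hlow : forall c x, ~~ (B.2.1 <= BLeft x)%O -> `|ssum [:: A, B & s'] c x| <= 1.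
  move=> c x hx; rewrite /ssum big_cons.
  have -> : \sum_(p <- B :: s') term c x p = 0.
    rewrite big_seq big1 // => p; rewrite inE => /orP [/eqP -> | ps].
      by rewrite /term /inI (negbTE hx).
    rewrite /term /inI; case: ifP => //= /andP [h _].
    move/allP: hBs' => /(_ p ps); rewrite /leT => hb.
    by move: hx; rewrite (le_trans hb h).
  by rewrite addr0 term_abs.
have key : forall X Y, (X.2.2 <= Y.2.2)%O -> (X.2.1 <= B.2.1)%O -> (Y.2.1 <= B.2.1)%O ->
    uniq (map fst [:: X, Y & s']) ->
    (forall c x, ssum [:: A, B & s'] c x = ssum [:: X, Y & s'] c x) ->
    exists c : T -> bool, forall x, `|ssum s c x| <= 1.
  move=> X Y hXY hX hY uXY EXY.
  have uC : uniq (map fst ((Y.1, (X.2.2, Y.2.2)) :: s')) by case/andP: uXY.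
  have [c0 hc0] := IH ((Y.1, (X.2.2, Y.2.2)) :: s') hsz2 uC.
  pose c := fun t => if t == X.1 then ~~ c0 Y.1 else c0 t.
  exists c => x; rewrite Esum.
  case: (boolP (B.2.1 <= BLeft x)%O) => hx; last exact: hlow.
  have nXY : (Y.1 == X.1) = false.
    by move: uXY => /= /andP [+ _]; rewrite inE negb_or eq_sym => /andP [/negbTE -> _].
  rewrite EXY merge //; [| |exact: le_trans hX hx|exact: le_trans hY hx]; last first.
    by rewrite /c eqxx nXY.
  rewrite (@ssum_eq _ c c0) //.
  move=> p; rewrite inE => /orP [/eqP -> | ps] /=; rewrite /c.
    by rewrite nXY.
  case: ifP => // /eqP e; move: uXY => /= /andP [+ _]; rewrite inE negb_or => /andP [_].
  by rewrite -e (map_f fst ps).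
case: (leP A.2.2 B.2.2) => h.
  by apply: (key A B) => //.
apply: (key B A) => //; first exact: ltW.
  move: us2 => /= /andP [hA /andP [hB ->]]; move: hA; rewrite !inE negb_or => /andP [h1 h2].
  by rewrite negb_or eq_sym h1 hB h2.
by move=> c x; rewrite /ssum !big_cons addrCA.
Qed.
End Two.

Lemma ab (a b : nat) : (1 < `|a%:Z - b%:Z|)%N -> (b + 2 <= a)%N \/ (a+2 <= b)%N.
Proof. lia. Qed.
Lemma ab2 (a b : nat) : `|a%:Z - b%:Z| <= 1 -> (b <= a + 1)%N /\ (a <= b+1)%N.
Proof. lia. Qed.

Lemma sq_step k (g g' : 'I_k -> nat) (i j : 'I_k) : i != j ->
  (forall t, t != i -> t != j -> g' t = g t) -> (g' i + g' j = g i + g j)%N ->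
  `|(g' i)%:Z - (g' j)%:Z| <= 1 ->
  (\sum_t g' t ^ 2 <= \sum_t g t ^ 2)%N /\
  ((1 < `|(g i)%:Z - (g j)%:Z|)%N -> (\sum_t g' t ^ 2 < \sum_t g t ^ 2)%N).
Proof.
move=> nij ho hs hb.
have split2 : forall h : 'I_k -> nat,
  (\sum_t h t ^ 2 = h i ^ 2 + h j ^ 2 + \sum_(t | (t != i) && (t != j)) h t ^ 2)%N.
  by move=> h; rewrite (bigD1 i) // (bigD1 j) 1?eq_sym //= addnA.
rewrite !split2.
have -> : (\sum_(t | (t != i) && (t != j)) g' t ^ 2 = \sum_(t | (t != i) && (t != j)) g t ^ 2)%N.
  by apply: eq_bigr => t /andP [h1 h2]; rewrite ho.
have [b1 b2] := ab2 _ _ hb.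
have [A1 A2] := ar _ _ _ _ hs b2 b1.
split; first by rewrite leq_add2r.
by move=> /(ab _ _) h; rewrite ltn_add2r; apply: A2; lia.
Qed.

Lemma cardS (T : finType) (X : {set T}) : #|X| = (\sum_t (t \in X : nat))%N.
Proof. by rewrite -sum1_card big_mkcond /=; apply: eq_bigr => t _; case: (t \in X). Qed.

Theorem theorem1 (R : realType) (n k : nat) (l r : 'I_n -> R)
  (hlr : forall j, l j <= r j)
  (hdist : forall j1 j2, l j1 = l j2 -> r j1 = r j2 -> j1 = j2)
  (hk : (0 < k)%N) :
  exists chi : 'I_n -> 'I_k, balanced l r chi.
Proof.
pose act x := [set j : 'I_n | l j <= x <= r j].
pose cls (f : 'I_n -> 'I_k) i := [set j | f j == i].
have cc : forall f i x, color_count l r f i x = #|act x :&: cls f i|.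
  by move=> f i x; apply: eq_card => j; rewrite !inE.
pose rb (S : {set 'I_n}) : bool :=
  if excluded_middle_informative (exists x, S = act x) then true else false.
pose Phi (f : {ffun 'I_n -> 'I_k}) :=
  (\sum_(S : {set 'I_n} | rb S) \sum_(i < k) #|S :&: cls f i| ^ 2)%N.
pose f0 : {ffun 'I_n -> 'I_k} := [ffun _ => Ordinal hk].
have := @arg_minnP _ f0 xpredT Phi isT.
case=> fm _ hmin.
exists fm => x; rewrite /imb_at.
apply/bigmax_leqP => i _; apply/bigmax_leqP => j _.
rewrite leqNgt; apply/negP => hij.
rewrite !cc in hij.
have nij : i != j by apply/eqP => e; move: hij; rewrite e subrr.
pose D := [set t | (fm t == i) || (fm t == j)].
pose s := [seq (t, (BLeft (l t), BRight (r t))) | t <- enum D].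
have us : uniq (map fst s).
  by rewrite /s -map_comp (eq_map (g := id)) // map_id enum_uniq.
have [c hc] := @two_col R _ s us.
pose f' : {ffun 'I_n -> 'I_k} := [ffun t => if t \in D then (if c t then i else j) else fm t].
have f'i : forall t, (f' t == i) = (t \in D) && c t.
  move=> t; rewrite /f' ffunE; case: (boolP (t \in D)) => hD /=.
    by case: (c t); rewrite ?eqxx // eq_sym (negbTE nij).
  by move: hD; rewrite inE negb_or => /andP [/negbTE].
have f'j : forall t, (f' t == j) = (t \in D) && ~~ c t.
  move=> t; rewrite /f' ffunE; case: (boolP (t \in D)) => hD /=.
    by case: (c t); rewrite ?eqxx // (negbTE nij).
  by move: hD; rewrite inE negb_or => /andP [_ /negbTE].
have f'o : forall t u, u != i -> u != j -> (f' t == u) = (fm t == u).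
  move=> t u hui huj; rewrite /f' ffunE; case: (boolP (t \in D)) => hD //.
  have : fm t = i \/ fm t = j by move: hD; rewrite inE => /orP [] /eqP; tauto.
  case=> ->; case: (c t); rewrite ![_ == u]eq_sym ?(negbTE hui) ?(negbTE huj) //.
have key : forall y, (\sum_(t < k) #|act y :&: cls f' t| ^ 2 <= \sum_(t < k) #|act y :&: cls fm t| ^ 2)%N /\
  ((1 < `|(#|act y :&: cls fm i| : int) - #|act y :&: cls fm j| |)%N ->
   (\sum_(t < k) #|act y :&: cls f' t| ^ 2 < \sum_(t < k) #|act y :&: cls fm t| ^ 2)%N).
  move=> y; apply: sq_step => //.
  - move=> t hti htj; rewrite !cardS; apply: eq_bigr => u _; rewrite !inE f'o //.
  - rewrite !cardS -!big_split /=; apply: eq_bigr => u _; rewrite !inE f'i f'j inE.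
    have : ~~ ((fm u == i) && (fm u == j)).
      by apply/andP => [[/eqP -> /eqP e]]; move: nij; rewrite e eqxx.
    move: (l u <= y <= r u)%R (fm u == i) (fm u == j) (c u) => a b d e.
    by case: a; case: b; case: d; case: e.
  - have := hc y; congr (_ <= _); congr `|_|.
    rewrite /ssum /s big_map big_enum /= big_mkcond /=.
    rewrite !cardS (big_morph Posz PoszD (erefl (Posz 0))) [X in _ = _ - X](big_morph Posz PoszD (erefl (Posz 0))).
    rewrite -sumrB; apply: eq_bigr => t _.
    rewrite /term /inI /= !bnd_simp !inE f'i f'j.
    have -> : (t \in D) = (fm t == i) || (fm t == j) by rewrite inE.
    case: ((fm t == i) || (fm t == j)); case: (l t <= y <= r t)%R; case: (c t) => //.
have hrb : rb (act x).
  by rewrite /rb; case: excluded_middle_informative => // h; exfalso; apply: h; exists x.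
have hlt : (Phi f' < Phi fm)%N.
  rewrite /Phi (bigD1 (act x)) // [X in (_ < X)%N](bigD1 (act x)) //=.
  rewrite -addSn; apply: leq_add; first by case: (key x) => _; apply.
  apply: leq_sum => S /andP [hS _]; move: hS; rewrite /rb.
  by case: excluded_middle_informative => // [[y e]] _; rewrite e; exact: (proj1 (key y)).
by have := hmin f' isT; rewrite leqNgt hlt.
Qed.
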